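(* Let $M$ be a manifold with a complete Riemannian metric $g_R$ and associated distance $d_R$. Let $S$ be a closed subset of $M$ and $\mathcal{W}=\{W_\alpha:\alpha\in\mathcal{I}\}$ a collection of open subsets of $M$ covering $S$, such that each $W_\alpha$ is contained in an open subset $\mathcal{C}_\alpha$ whose $d_R$-diameter is smaller than $1$. Then there exists a subcollection $\mathcal{W}'=\{W_j: j\in\mathbb{N}\}\subset\mathcal{W}$ which covers $S$ and is locally finite (i.e., each $p\in\bigcup_j W_j$ has a neighborhood $V$ with $V\cap W_j=\emptyset$ for all but finitely many $j$). Moreover, the collection $\{\mathcal{C}_j: j\in\mathbb{N}\}$, where $\mathcal{C}_j$ is the open set containing $W_j$, is locally finite too. *)

(* Defs.v *)
From Stdlib Require Import Reals List.
Open Scope R_scope.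

Section MetricDefs.
Context {M : Type} (d : M -> M -> R).

Definition is_metric : Prop :=
  (forall x y, 0 <= d x y) /\
  (forall x y, d x y = 0 <-> x = y) /\
  (forall x y, d x y = d y x) /\
  (forall x y z, d x z <= d x y + d y z).

Definition mopen (U : M -> Prop) : Prop :=
  forall x, U x -> exists e, 0 < e /\ forall y, d x y < e -> U y.

Definition mclosed (F : M -> Prop) : Prop :=
  mopen (fun x => ~ F x).

Definition mcompact (K : M -> Prop) : Prop :=
  forall (J : Type) (U : J -> M -> Prop),
    (forall j, mopen (U j)) ->
    (forall x, K x -> exists j, U j x) ->
    exists l : list J, forall x, K x -> exists j, In j l /\ U j x.

(* Hopf-Rinow: for a complete Riemannian metric, closed bounded sets
   (equivalently, closed balls) are compact. *)
Definition proper_metric : Prop :=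
  forall x r, mcompact (fun y => d x y <= r).

Definition diam_lt1 (C : M -> Prop) : Prop :=
  exists r, r < 1 /\ forall x y, C x -> C y -> d x y <= r.

Definition locally_finite_on {I : Type} (J : I -> Prop) (F : I -> M -> Prop)
  : Prop :=
  forall p, (exists a, J a /\ F a p) ->
    exists V : M -> Prop, mopen V /\ V p /\
      exists l : list I, forall a, J a -> (exists x, V x /\ F a x) -> In a l.

End MetricDefs.

Definition countable_idx {I : Type} (J : I -> Prop) : Prop :=
  exists f : I -> nat, forall a b, J a -> J b -> f a = f b -> a = b.

(* Main.v *)
Require Import Defs.
From Stdlib Require Import Reals List.
From Stdlib Require Import ZArith Lra Lia Classical ClassicalEpsilon Cantor.
Open Scope R_scope.

Lemma nat_unbounded (r : R) : exists N : nat, r < INR N.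
Proof.
  destruct (archimed r) as [H1 _].
  destruct (Z_lt_le_dec (up r) 0) as [h|h].
  - exists 0%nat. simpl. apply IZR_lt in h. lra.
  - exists (Z.to_nat (up r)). rewrite INR_IZR_INZ, Z2Nat.id by lia. lra.
Qed.

Lemma nat_floor (r : R) : 0 <= r -> exists n : nat, INR n <= r <= INR n + 1.
Proof.
  intros hr. destruct (nat_unbounded r) as [N HN].
  revert HN. induction N as [|N IH]; intros HN.
  - simpl in HN. lra.
  - destruct (Rlt_le_dec r (INR N)) as [h|h].
    + apply IH, h.
    + exists N. rewrite S_INR in HN. lra.
Qed.

Definition optl {I : Type} (o : option I) : list I :=
  match o with Some a => a :: nil | None => nil end.

Theorem lemma4p13 (M : Type) (d : M -> M -> R)
  (hmetric : is_metric d) (hproper : proper_metric d)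
  (S : M -> Prop) (hS : mclosed d S)
  (I : Type) (W C : I -> M -> Prop)
  (hWopen : forall a, mopen d (W a))
  (hcover : forall x, S x -> exists a, W a x)
  (hCopen : forall a, mopen d (C a))
  (hWC : forall a x, W a x -> C a x)
  (hdiam : forall a, diam_lt1 d (C a)) :
  exists J : I -> Prop,
    countable_idx J /\
    (forall x, S x -> exists a, J a /\ W a x) /\
    locally_finite_on d J W /\
    locally_finite_on d J C.
Proof.
  destruct hmetric as [d0 [dxy [dsym dtri]]].
  destruct (classic (inhabited M)) as [[o]|hne].
  2:{ exists (fun _ => False). repeat split.
      - exists (fun _ => 0%nat). intros a b [].
      - intros x _. exfalso. apply hne. exact (inhabits x).
      - intros p _. exfalso. apply hne. exact (inhabits p).
      - intros p _. exfalso. apply hne. exact (inhabits p). }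
  set (K := fun (n : nat) x => S x /\ INR n <= d o x <= INR n + 1).
  assert (Hl : forall n, exists l : list (option I),
             forall x, K n x -> exists a, In (Some a) l /\ W a x).
  { intro n.
    destruct (hproper o (INR n + 1) (option I)
      (fun j x => match j with
                  | Some a => W a x /\ (exists y, K n y /\ W a y)
                  | None => ~ K n x end)) as [l Hl].
    - intros [a|] x Hx.
      + destruct Hx as [Hx Hy]. destruct (hWopen a x Hx) as [e [He He']].
        exists e. split; auto.
      + destruct (classic (S x)) as [hsx|hsx].
        * destruct (Rlt_le_dec (d o x) (INR n)) as [h|h].
          -- exists (INR n - d o x). split; [lra|].
             intros y hy [_ [h1 _]]. specialize (dtri o x y). lra.
          -- destruct (Rlt_le_dec (INR n + 1) (d o x)) as [h'|h'].
             ++ exists (d o x - (INR n + 1)). split; [lra|].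
                intros y hy [_ [_ h1]]. specialize (dtri o y x).
                rewrite (dsym y x) in dtri. lra.
             ++ exfalso. apply Hx. split; auto.
        * destruct (hS x hsx) as [e [He He']]. exists e. split; auto.
          intros y hy [h _]. exact (He' y hy h).
    - intros x hx. destruct (classic (K n x)) as [hk|hk].
      + destruct (hcover x (proj1 hk)) as [a ha].
        exists (Some a). split; auto. exists x. auto.
      + exists None. exact hk.
    - exists l. intros x hk.
      destruct (Hl x (proj2 (proj2 hk))) as [[a|] [hin hu]].
      + exists a. split; auto. apply hu.
      + contradiction. }
  set (l := fun n => proj1_sig (constructive_indefinite_description _ (Hl n))).
  assert (Hln : forall n x, K n x -> exists a, In (Some a) (l n) /\ W a x).
  { intro n. exact (proj2_sig (constructive_indefinite_description _ (Hl n))). }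
  clearbody l.
  set (J := fun a => exists n, In (Some a) (l n) /\ exists y, K n y /\ W a y).
  assert (HLC : locally_finite_on d J C).
  { intros p _. exists (fun y => d p y < 1). split; [|split].
    - intros x hx. exists (1 - d p x). split; [lra|].
      intros y hy. specialize (dtri p x y). lra.
    - rewrite (proj2 (dxy p p) eq_refl). lra.
    - destruct (nat_unbounded (d o p + 2)) as [N HN].
      exists (flat_map (fun n => flat_map optl (l n)) (seq 0 N)).
      intros a [n [hin [y [[_ [hy1 hy2]] hwy]]]] [x [hx hcx]].
      apply in_flat_map. exists n. split.
      + apply in_seq. split; [lia|].
        destruct (hdiam a) as [r [hr hr']].
        specialize (hr' y x (hWC a y hwy) hcx).
        pose proof (dtri o p x). pose proof (dtri o x y).
        rewrite (dsym x y) in H0.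
        assert (INR n < INR N) by lra. apply INR_lt in H1. lia.
      + apply in_flat_map. exists (Some a). split; auto. simpl. auto. }
  exists J. split; [|split; [|split]].
  - exists (fun a => Cantor.to_nat (epsilon (inhabits (0%nat, 0%nat))
        (fun pk => nth_error (l (fst pk)) (snd pk) = Some (Some a)))).
    intros a b ha hb hab.
    assert (Ea : exists pk : nat * nat, nth_error (l (fst pk)) (snd pk) = Some (Some a)).
    { destruct ha as [n [hin _]]. destruct (In_nth_error _ _ hin) as [k hk].
      exists (n, k). exact hk. }
    assert (Eb : exists pk : nat * nat, nth_error (l (fst pk)) (snd pk) = Some (Some b)).
    { destruct hb as [n [hin _]]. destruct (In_nth_error _ _ hin) as [k hk].
      exists (n, k). exact hk. }
    pose proof (epsilon_spec (inhabits (0%nat, 0%nat)) _ Ea) as Pa.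
    pose proof (epsilon_spec (inhabits (0%nat, 0%nat)) _ Eb) as Pb.
    apply (f_equal Cantor.of_nat) in hab. rewrite !Cantor.cancel_of_to in hab.
    cbv beta in Pa, Pb. rewrite hab in Pa. rewrite Pa in Pb. congruence.
  - intros x hx. destruct (nat_floor (d o x) (d0 o x)) as [n hn].
    assert (hk : K n x) by (split; auto).
    destruct (Hln n x hk) as [a [hin hw]]. exists a. split; auto.
    exists n. split; auto. exists x. auto.
  - intros p hp. destruct (HLC p) as [V [hV [hVp [L HL]]]].
    { destruct hp as [a [ja hw]]. exists a. auto. }
    exists V. split; [|split]; auto. exists L. intros a ja [x [hx hw]].
    apply HL; auto. exists x. auto.
  - exact HLC.
Qed.
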